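(* Let $R$ be a commutative ring with identity, $M$ an $R$-module and $a\in R$. Then $$\bigcap_{b\in R} b\Gamma_b(M)\subseteq a\Gamma_a(M)\subseteq S_a(M)\subseteq S(M)\subseteq \beta(M)\subseteq \operatorname{Rad}(M).$$
   Context: For $b\in R$, $b\Gamma_{b}(M)=\{bm \mid m\in M,\ b^{k}m=0 \text{ for some } k\in\mathbb{Z}^{+}\}$. An $R$-module $N$ is $b$-reduced if $b^2n=0$ implies $bn=0$ for $n\in N$, and reduced if it is $b$-reduced for all $b\in R$. A proper submodule $N$ of $M$ is $a$-semiprime (resp. semiprime) if $M/N$ is $a$-reduced (resp. reduced). A proper submodule $N$ of $M$ is prime if for all $r\in R$, $m\in M$, $rm\in N$ implies $m\in N$ or $rM\subseteq N$. $S_a(M)$, $S(M)$, $\beta(M)$, $\operatorname{Rad}(M)$ denote respectively the intersections of all $a$-semiprime, all semiprime, all prime, and all maximal submodules of $M$ (the empty intersection being $M$). *)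

(* Defs.v *)
From HB Require Import structures.
From mathcomp Require Import all_boot all_order all_algebra.
Set Implicit Arguments. Unset Strict Implicit. Unset Printing Implicit Defensive.
Import GRing.Theory.
Local Open Scope ring_scope.

Section Modules.
Variables (R : comPzRingType) (M : lmodType R).

Definition is_submodule (N : M -> Prop) : Prop :=
  N 0 /\ (forall x y, N x -> N y -> N (x + y)) /\ (forall (r : R) x, N x -> N (r *: x)).

Definition proper_submodule (N : M -> Prop) : Prop :=
  is_submodule N /\ exists m, ~ N m.

Definition bGamma (b : R) (x : M) : Prop :=
  exists m : M, x = b *: m /\ exists k : nat, (0 < k)%N /\ (b ^+ k) *: m = 0.

(* M/N is b-reduced: b^2 (m + N) = 0 implies b (m + N) = 0, i.e. written on
   representatives: b^2 m \in N -> b m \in N. *)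
Definition quot_reduced_by (N : M -> Prop) (b : R) : Prop :=
  forall m : M, N ((b ^+ 2) *: m) -> N (b *: m).

Definition a_semiprime (a : R) (N : M -> Prop) : Prop :=
  proper_submodule N /\ quot_reduced_by N a.

Definition semiprime (N : M -> Prop) : Prop :=
  proper_submodule N /\ forall b : R, quot_reduced_by N b.

Definition prime_submodule (N : M -> Prop) : Prop :=
  proper_submodule N /\
  forall (r : R) (m : M), N (r *: m) -> N m \/ (forall x : M, N (r *: x)).

Definition maximal_submodule (N : M -> Prop) : Prop :=
  proper_submodule N /\
  forall K : M -> Prop, is_submodule K -> (forall x, N x -> K x) ->
    (forall x, K x <-> N x) \/ (forall x, K x).

(* Intersections of families of submodules (empty intersection = M). *)
Definition S_a (a : R) (x : M) : Prop := forall N, a_semiprime a N -> N x.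
Definition S_all (x : M) : Prop := forall N, semiprime N -> N x.
Definition beta (x : M) : Prop := forall N, prime_submodule N -> N x.
Definition Rad (x : M) : Prop := forall N, maximal_submodule N -> N x.

End Modules.

(* Main.v *)
Require Import Defs.
From mathcomp Require Import all_boot all_order all_algebra.
From Stdlib Require Import Classical.
Local Open Scope ring_scope.
Import GRing.Theory.

Lemma red_pow (R : comPzRingType) (M : lmodType R) (a : R) (N : M -> Prop) (m : M) :
  quot_reduced_by N a -> forall j, N ((a ^+ j.+1) *: m) -> N (a *: m).
Proof.
move=> Hr; elim=> [|j IH]; first by rewrite expr1.
move=> H; apply: IH; rewrite exprS -scalerA; apply: Hr.
by rewrite scalerA -exprD.
Qed.

Theorem mainTheorem12 (R : comPzRingType) (M : lmodType R) (a : R) :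
  (forall x : M, (forall b : R, bGamma b x) -> bGamma a x) /\
  (forall x : M, bGamma a x -> S_a a x) /\
  (forall x : M, S_a a x -> S_all x) /\
  (forall x : M, S_all x -> beta x) /\
  (forall x : M, beta x -> Rad x).
Proof.
split; first by move=> x H; apply: H.
split.
  move=> x [m [-> [k [Hk Hm]]]] N [[[N0 _] _] Hr].
  case: k Hk Hm => [//|j] _ Hm.
  by apply: (@red_pow _ _ _ _ _ Hr j); rewrite Hm.
split.
  by move=> x H N [HN Hr]; apply: H; split.
split.
  move=> x H N [HN Hp]; apply: H; split => // b m Hm.
  rewrite expr2 -scalerA in Hm.
  by case: (Hp _ _ Hm).
move=> x H N [HN Hmax]; apply: H; split => // r m Hrm.
case: (classic (N m)) => Hm; [by left | right].
have [[N0 [ND NZ]] _] := HN.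
have HK : is_submodule (fun y => N (r *: y)).
  split; first by rewrite scaler0.
  split; first by move=> y z Hy Hz; rewrite scalerDr; apply: ND.
  by move=> s y Hy; rewrite scalerA mulrC -scalerA; apply: NZ.
case: (Hmax _ HK) => [y Hy|Heq|Hall] //; first by apply: NZ.
by exfalso; apply: Hm; apply/Heq.
Qed.
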